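(* Let $X$ be a real normed space, $\mathcal M=\{M_1,\dots,M_n\}\subset\mathcal P^f_{\mathrm{Cl,Conv}}(X)$, $\Sigma(\mathcal M)\neq\emptyset$ and $d=(d_1,\dots,d_n)\in\Omega(\mathcal M)$. Suppose there is an index $s$ such that every nonempty set of the form $B_r(M_s)\cap K_d$ ($0\le r<\infty$) lies in the same finiteness class as the $M_i$ (i.e. $d_H(B_r(M_s)\cap K_d,M_1)<\infty$). Then there exists $i$ with $d_i=\sup_{x\in M_i}|x\,K_d|$.
   Context: For a metric space $X$, $p\in X$, $A\subset X$: $|p\,A|=\inf_{a\in A}|p\,a|$ ($=\infty$ if $A=\emptyset$); for $0\le r<\infty$, $B_r(A)=\{p:|p\,A|\le r\}$. For nonempty $A,B$, $d_H(A,B)=\max\{\sup_{a\in A}|a\,B|,\sup_{b\in B}|b\,A|\}\in[0,\infty]$. $\mathcal P_{\mathrm{Cl}}(X)$ is the set of nonempty closed subsets of $X$ with $d_H$; a finiteness class is an equivalence class of $A\sim B\iff d_H(A,B)<\infty$. $\mathcal P^f_{\mathrm{Cl,Conv}}(X)$ denotes a fixed finiteness class of the space of nonempty closed convex subsets of $X$ (a family of nonempty closed convex sets pairwise at finite Hausdorff distance, maximal with this property); let $\mathcal P^f_{\mathrm{Cl}}(X)$ be the finiteness class of $\mathcal P_{\mathrm{Cl}}(X)$ containing it. For $\mathcal M=\{M_1,\dots,M_n\}$ in it, $S_{\mathcal M}(Y)=\sum_i d_H(Y,M_i)$; $\Sigma(\mathcal M)$ is the set of minimizers of $S_{\mathcal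 M}$ over $\mathcal P^f_{\mathrm{Cl}}(X)$; for $K\in\Sigma(\mathcal M)$, $d(K)=(d_H(K,M_1),\dots,d_H(K,M_n))$; $\Omega(\mathcal M)=\{d(K):K\in\Sigma(\mathcal M)\}$; for $d\in\Omega(\mathcal M)$, $\Sigma_d(\mathcal M)=\{K\in\Sigma(\mathcal M):d(K)=d\}$ and $K_d=\bigcap_{i=1}^nB_{d_i}(M_i)$. *)

(* Defs.v *)
From HB Require Import structures.
From mathcomp Require Import all_boot all_order all_algebra.
From mathcomp Require Import all_classical all_reals.
From mathcomp Require Import ereal topology normedtype.
Set Implicit Arguments. Unset Strict Implicit. Unset Printing Implicit Defensive.
Import Order.TTheory GRing.Theory Num.Theory.
Import numFieldNormedType.Exports.
Local Open Scope classical_set_scope.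
Local Open Scope ring_scope.

Section Defs.
Variables (R : realType) (X : normedModType R).

(* |p A| = inf_{a in A} |p a|, = +oo if A is empty *)
Definition pdist (p : X) (A : set X) : \bar R :=
  ereal_inf [set (`|p - a|)%:E | a in A].

Definition Bset (r : R) (A : set X) : set X :=
  [set p | (pdist p A <= r%:E)%E].

Definition dH (A B : set X) : \bar R :=
  maxe (ereal_sup [set pdist a B | a in A])
       (ereal_sup [set pdist b A | b in B]).

Definition convex (A : set X) : Prop :=
  forall x y (t : R), A x -> A y -> 0 <= t <= 1 -> A (t *: x + (1 - t) *: y).

(* the finiteness class of P_Cl(X) containing M0 *)
Definition PfCl (M0 : set X) (Y : set X) : Prop :=
  Y !=set0 /\ closed Y /\ (dH Y M0 < +oo)%E.

Variable n : nat.
Implicit Types (M : 'I_n.+1 -> set X).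

Definition SM M (Y : set X) : \bar R := (\sum_(i < n.+1) dH Y (M i))%E.

Definition Sigma M (K : set X) : Prop :=
  PfCl (M ord0) K /\ forall Y, PfCl (M ord0) Y -> (SM M K <= SM M Y)%E.

Definition Omega M (d : 'I_n.+1 -> R) : Prop :=
  exists K, Sigma M K /\ forall i, dH K (M i) = (d i)%:E.

Definition Kd M (d : 'I_n.+1 -> R) : set X :=
  [set p | forall i, Bset (d i) (M i) p].

End Defs.

(* Main.v *)
Require Import Defs.
From HB Require Import structures.
From mathcomp Require Import all_boot all_order all_algebra.
From mathcomp Require Import all_classical all_reals.
From mathcomp Require Import ereal topology normedtype.
From mathcomp Require Import lra ring.
Set Implicit Arguments. Unset Strict Implicit.
Import Order.TTheory GRing.Theory Num.Theory.
Import numFieldNormedType.Exports.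
Local Open Scope classical_set_scope.
Local Open Scope ring_scope.

Section H.
Variables (R : realType) (X : normedModType R).
Implicit Types (A : set X) (p q : X).

Lemma pd_le A p a : A a -> (pdist p A <= (`|p - a|)%:E)%E.
Proof. by move=> Aa; apply: ereal_inf_lbound; exists a. Qed.

Lemma pd_ge0 A p : (0 <= pdist p A)%E.
Proof. by apply: le_ereal_inf_tmp => _ [a _ <-]; rewrite lee_fin. Qed.

Lemma pd_lt A p x : (pdist p A < x%:E)%E -> exists2 a, A a & `|p - a| < x.
Proof. by move/ereal_inf_lt => [_ [a Aa <-]]; rewrite lte_fin => h; exists a. Qed.

Lemma pd_fin A p : A !=set0 -> exists v, pdist p A = v%:E /\ 0 <= v.
Proof.
move=> [a Aa]; have := pd_ge0 A p; have := pd_le p Aa.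
case: (pdist p A) => [v| |] //= _; rewrite lee_fin => h; by exists v.
Qed.

Lemma pd_tri A p q : (pdist p A <= (`|p - q|)%:E + pdist q A)%E.
Proof.
apply/lee_addgt0Pr => e e0.
have := pd_ge0 A q; case E: (pdist q A) => [v| |] //= _.
- have [a Aa ha] : exists2 a, A a & `|q - a| < v + e.
    by apply: pd_lt; rewrite E lte_fin ltrDl.
  apply: (le_trans (pd_le p Aa)); rewrite -!EFinD lee_fin.
  have := ler_distD q p a; lra.
- by rewrite addey // addye // leey.
Qed.

Lemma Bset_closed r A : closed (Bset r A).
Proof.
move=> p clp; rewrite /Bset /=; apply/lee_addgt0Pr => e e0.
have [q [Bq pq]] := clp _ (nbhsx_ballx p _ e0).
apply: (le_trans (pd_tri A p q)); rewrite addeC leeD //.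
move: pq; rewrite -ball_normE /= lee_fin; exact: ltW.
Qed.


Lemma pd_conv A x y t u v : convex A -> 0 <= t <= 1 ->
  (pdist x A <= u%:E)%E -> (pdist y A <= v%:E)%E ->
  (pdist (t *: x + (1 - t) *: y)%R A <= (t * u + (1 - t) * v)%:E)%E.
Proof.
move=> cA t01 hx hy; have /andP[t0 t1] := t01.
apply/lee_addgt0Pr => e e0.
have [a Aa ha] : exists2 a, A a & `|x - a| < u + e.
  by apply: pd_lt; apply: (le_lt_trans hx); rewrite lte_fin ltrDl.
have [b Ab hb] : exists2 b, A b & `|y - b| < v + e.
  by apply: pd_lt; apply: (le_lt_trans hy); rewrite lte_fin ltrDl.
apply: (le_trans (pd_le _ (cA _ _ t Aa Ab t01))); rewrite -EFinD lee_fin.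
have -> : t *: x + (1 - t) *: y - (t *: a + (1 - t) *: b) =
          t *: (x - a) + (1 - t) *: (y - b).
  by rewrite !scalerBr opprD addrACA.
apply: (le_trans (ler_normD _ _)); rewrite !normrZ !ger0_norm ?subr_ge0 //.
have := ler_wpM2l t0 (ltW ha).
have t1' : 0 <= 1 - t by rewrite subr_ge0.
have := ler_wpM2l t1' (ltW hb); lra.
Qed.

Lemma dH_le A B x : (forall a, A a -> (pdist a B <= x%:E)%E) ->
  (forall b, B b -> (pdist b A <= x%:E)%E) -> (dH A B <= x%:E)%E.
Proof.
move=> h1 h2; rewrite /dH ge_max; apply/andP; split;
  apply: ge_ereal_sup => _ [a Aa <-]; auto.
Qed.

Lemma dH_ge1 A B a : A a -> (pdist a B <= dH A B)%E.
Proof.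
move=> Aa; rewrite /dH le_max; apply/orP; left.
by apply: ereal_sup_ubound; exists a.
Qed.

Lemma dH_ge2 A B b : B b -> (pdist b A <= dH A B)%E.
Proof.
move=> Bb; rewrite /dH le_max; apply/orP; right.
by apply: ereal_sup_ubound; exists b.
Qed.

Lemma pd_anti A B p : A `<=` B -> (pdist p B <= pdist p A)%E.
Proof. by move=> AB; apply: le_ereal_inf_tmp => _ [a Aa <-]; apply: pd_le; exact: AB. Qed.

Lemma Kd_closed n (M : 'I_n.+1 -> set X) d : closed (Kd M d).
Proof.
move=> p clp i; have := @Bset_closed (d i) (M i) p; apply.
by apply: (closure_subset _ clp) => q; apply.
Qed.

Lemma seq_min (s : seq R) : (forall x, x \in s -> 0 < x) ->
  exists2 e, 0 < e & forall x, x \in s -> e <= x.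
Proof.
elim: s => [|a s IH] h; first by exists 1.
have [e e0 he] := IH (fun x xs => h x (mem_behead (s:=a :: s) xs)).
exists (Num.min a e).
  by rewrite lt_min e0 andbT; apply: h; rewrite inE eqxx.
move=> x; rewrite inE => /orP[/eqP ->|xs]; rewrite ge_min.
  by rewrite lexx.
by rewrite he ?orbT.
Qed.

Lemma fin_min n (g : 'I_n.+1 -> R) : (forall i, 0 < g i) ->
  exists2 e, 0 < e & forall i, e <= g i.
Proof.
move=> h; have [|e e0 he] := @seq_min [seq g i | i <- enum 'I_n.+1].
  by move=> x /mapP [i _ ->].
by exists e => // i; apply: he; apply: map_f; rewrite mem_enum.
Qed.

End H.

Unset Implicit Arguments.
Theorem mainTheorem14 (R : realType) (X : normedModType R) (n : nat)
  (M : 'I_n.+1 -> set X)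
  (hne : forall i, M i !=set0)
  (hcl : forall i, closed (M i))
  (hcv : forall i, convex (M i))
  (hfin : forall i j, (dH (M i) (M j) < +oo)%E)
  (hSigma : exists K, Sigma M K)
  (d : 'I_n.+1 -> R) (hd : Omega M d)
  (hs : exists s : 'I_n.+1, forall r : R, 0 <= r ->
          (Bset r (M s) `&` Kd M d) !=set0 ->
          (dH (Bset r (M s) `&` Kd M d) (M ord0) < +oo)%E) :
  exists i : 'I_n.+1,
    (d i)%:E = ereal_sup [set pdist x (Kd M d) | x in M i].
Proof.
have [K [[KPf Kmin] hdK]] := hd.
have [[k0 Kk0] [Kcl Kfin]] := KPf.
have hKK : K `<=` Kd M d.
  by move=> k Kk i; rewrite /Bset /= -hdK; exact: dH_ge1.
have d0 : forall i, 0 <= d i.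
  by move=> i; rewrite -lee_fin -hdK; exact: le_trans (pd_ge0 (M i) k0) (dH_ge1 _ Kk0).
have hsig : forall i y, M i y -> (pdist y (Kd M d) <= (d i)%:E)%E.
  move=> i y My; apply: (le_trans (pd_anti y hKK)); rewrite -hdK; exact: dH_ge2.
apply: contrapT => hno.
have hg : forall i, exists v, v < d i /\ 0 <= v /\
    forall y, M i y -> (pdist y (Kd M d) <= v%:E)%E.
  move=> i; have [y0 My0] := hne i.
  have sup0 : (0 <= ereal_sup [set pdist x (Kd M d) | x in M i])%E.
    by apply: le_ereal_sup_tmp; exists (pdist y0 (Kd M d)); [exists y0|exact: pd_ge0].
  have supd : (ereal_sup [set pdist x (Kd M d) | x in M i] <= (d i)%:E)%E.
    by apply: ge_ereal_sup => _ [y My <-]; exact: hsig.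
  move: sup0 supd.
  case E: (ereal_sup [set pdist x (Kd M d) | x in M i]) => [v| |] //; rewrite !lee_fin => v0 vd.
  exists v; split; last split => //.
    rewrite lt_neqAle vd andbT; apply/negP => /eqP vE; apply: hno; exists i.
    by rewrite E vE.
  by move=> y My; rewrite -E; apply: ereal_sup_ubound; exists y.
have [v hv] := choice hg.
have [eps eps0 heps] := @fin_min R n (fun i => d i - v i) (fun i => ltac:(rewrite subr_gt0; exact: (hv i).1)).
have hM : forall i y, M i y -> (pdist y (Kd M d) <= (d i - eps)%:E)%E.
  move=> i y My; apply: (le_trans ((hv i).2.2 y My)); rewrite lee_fin.
  have := heps i; lra.
have epsd : forall i, eps <= d i.
  by move=> i; have := heps i; have := (hv i).2.1; lra.
have [s hs'] := hs.
pose r0 := d s - eps / 2.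
have r0ge : 0 <= r0 by rewrite /r0; have := epsd s; lra.
have K0ne : (Bset r0 (M s) `&` Kd M d) !=set0.
  have [y0 My0] := hne s.
  have [z Kz hz] : exists2 z, Kd M d z & `|y0 - z| < r0.
    apply: pd_lt; apply: (le_lt_trans (hM s y0 My0)); rewrite lte_fin /r0; lra.
  exists z; split => //; rewrite /Bset /=.
  apply: (le_trans (pd_le _ My0)); rewrite lee_fin distrC; exact: ltW.
have hC := hs' r0 r0ge K0ne.
have [C hC'] : exists C, (dH (Bset r0 (M s) `&` Kd M d) (M ord0) <= C%:E)%E.
  move: hC; case: (dH _ _) => [c| |] //; first by exists c.
  by exists 0; rewrite leNye.
pose D := d ord0 + `|C| + 2.
have Dp : 0 < D by rewrite /D; have := d0 ord0; have := normr_ge0 C; lra.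
have hD : forall z, Kd M d z -> exists2 p, (Bset r0 (M s) `&` Kd M d) p & `|z - p| < D.
  move=> z Kz.
  have [a Ma ha] : exists2 a, M ord0 a & `|z - a| < d ord0 + 1.
    by apply: pd_lt; apply: (le_lt_trans (Kz ord0)); rewrite lte_fin; lra.
  have [p Kp hp] : exists2 p, (Bset r0 (M s) `&` Kd M d) p & `|a - p| < `|C| + 1.
    apply: pd_lt; apply: (le_lt_trans (dH_ge2 _ Ma)); apply: (le_lt_trans hC').
    by rewrite lte_fin; have := ler_norm C; lra.
  exists p => //; have := ler_distD a z p; rewrite /D; lra.
pose t := eps / (4 * D + eps).
have tD : t * (4 * D + eps) = eps by rewrite /t divfK // gt_eqF //; lra.
have t0 : 0 < t by rewrite /t divr_gt0 //; lra.
have t1 : t <= 1 by nra.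
have tDe : t * D <= eps / 4 by nra.
pose del := t * eps / 2.
have del0 : 0 < del by rewrite /del; apply: divr_gt0 => //; exact: mulr_gt0.
have dele : del <= eps / 2 by rewrite /del; nra.
pose K' := Bset (d s - del) (M s) `&` Kd M d.
have hw : forall z, Kd M d z -> exists2 w, K' w & `|z - w| <= eps / 4.
  move=> z Kz; have [p [Bp Kp] hzp] := hD z Kz.
  have t01 : 0 <= t <= 1 by rewrite (ltW t0) t1.
  exists (t *: p + (1 - t) *: z); first split.
  - rewrite /Bset /=; apply: (le_trans (pd_conv (hcv s) t01 Bp (Kz s))).
    by rewrite lee_fin /r0 /del; rewrite le_eqVlt; apply/orP; left; apply/eqP; ring.
  - move=> i; rewrite /Bset /=; apply: (le_trans (pd_conv (hcv i) t01 (Kp i) (Kz i))).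
    by rewrite lee_fin; rewrite le_eqVlt; apply/orP; left; apply/eqP; ring.
  have -> : z - (t *: p + (1 - t) *: z) = t *: (z - p).
    rewrite scalerBl scale1r scalerBr opprD opprB addrCA [z + _]addrC subrK addrC //.
  rewrite normrZ ger0_norm; last exact: ltW.
  have := ler_wpM2l (ltW t0) (ltW hzp); lra.
have hy : forall i y, M i y -> (pdist y K' <= (d i - eps / 2)%:E)%E.
  move=> i y My.
  have [z Kz hz] : exists2 z, Kd M d z & `|y - z| < d i - eps + eps / 4.
    by apply: pd_lt; apply: (le_lt_trans (hM i y My)); rewrite lte_fin; lra.
  have [w K'w hzw] := hw z Kz.
  apply: (le_trans (pd_le _ K'w)); rewrite lee_fin.
  have := ler_distD z y w; lra.
pose b i := if i == s then d s - del else d i.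
have hb : forall i, (dH K' (M i) <= (b i)%:E)%E.
  move=> i; rewrite /b; case: eqP => [->|ne].
    apply: dH_le => [x [Bx _]|y My] //.
    by apply: (le_trans (hy s y My)); rewrite lee_fin; lra.
  apply: dH_le => [x [_ Kx]|y My]; first exact: Kx.
  by apply: (le_trans (hy i y My)); rewrite lee_fin; lra.
have K'ne : K' !=set0.
  have [z0 [_ Kz0]] := K0ne; have [w K'w _] := hw z0 Kz0; by exists w.
have K'cl : closed K' by apply: closedI; [exact: Bset_closed|exact: Kd_closed].
have K'Pf : PfCl (M ord0) K'.
  by split => //; split => //; apply: (le_lt_trans (hb ord0)); exact: ltey.
have := Kmin K' K'Pf.
have -> : SM M K = (\sum_(i < n.+1) d i)%:E.
  by rewrite /SM -sumEFin; apply: eq_bigr => i _; rewrite hdK.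
move=> h; have h2 : (SM M K' <= \sum_(i < n.+1) (b i)%:E)%E.
  by rewrite /SM; apply: lee_sum => i _; exact: hb.
have := le_trans h h2.
rewrite sumEFin lee_fin (bigD1 s) //= [X in _ <= X](bigD1 s) //=.
rewrite [X in _ <= _ + X](eq_bigr d); last by move=> i /negbTE ne; rewrite /b ne.
rewrite /b eqxx; lra.
Qed.
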